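(* Let $n=1$ or let $n$ be a prime with $n\equiv 1\pmod{10}$, and let $d=17n-1$. Then there exists a Cayley graph of diameter two, degree $d$, and order $\frac{200}{289}(d+1)^2$ (i.e. with $200n^2$ vertices).
   Context: For a finite group $\Gamma$ and a generating set $X\subset\Gamma$ with $1_\Gamma\notin X$ and $X=X^{-1}$, the Cayley graph $\mathrm{Cay}(\Gamma,X)$ has vertex set $\Gamma$ and edges $\{g,h\}$ whenever $g^{-1}h\in X$; it is a simple undirected $|X|$-regular graph, and its degree is $|X|$. *)

(* Defs.v *)
From mathcomp Require Import all_boot all_order all_fingroup.
Set Implicit Arguments. Unset Strict Implicit. Unset Printing Implicit Defensive.
Local Open Scope group_scope.

Definition cayley_rel (gT : finGroupType) (X : {set gT}) : rel gT :=
  fun g h => g^-1 * h \in X.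

Definition cayley_conn_set (gT : finGroupType) (X : {set gT}) : Prop :=
  [/\ 1 \notin X, X^-1 = X & <<X>> = [set: gT]].

Definition cayley_within (gT : finGroupType) (X : {set gT}) (k : nat) (g h : gT) : Prop :=
  exists p : seq gT, [&& path (cayley_rel X) g p, last g p == h & size p <= k].

Definition cayley_diameter (gT : finGroupType) (X : {set gT}) (k : nat) : Prop :=
  (forall g h : gT, cayley_within X k g h) /\
  (exists g h : gT, ~ cayley_within X k.-1 g h) /\ 0 < k.

(* Main.v *)
Require Import Defs.
From mathcomp Require Import all_boot all_order all_fingroup.
From HB Require Import structures.
From mathcomp Require Import all_algebra zify.
Set Implicit Arguments. Unset Strict Implicit. Unset Printing Implicit Defensive.
Import GRing.Theory.

Section Wr.
Variable W : finZmodType.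
Definition wr := (W * W * bool)%type.
HB.instance Definition _ := Finite.on wr.
Local Open Scope ring_scope.
Definition sw {T : Type} (s : bool) (x : T * T) : T * T := if s then (x.2, x.1) else x.
Definition wmul (x y : wr) : wr := (x.1 + sw x.2 y.1, x.2 (+) y.2).
Definition wone : wr := (0, false).
Definition winv (x : wr) : wr := (- sw x.2 x.1, x.2).
Lemma swD s (x y : W * W) : sw s (x + y) = sw s x + sw s y. Proof. by case: s. Qed.
Lemma swN s (x : W * W) : sw s (- x) = - sw s x. Proof. by case: s. Qed.
Lemma swK s (x : W * W) : sw s (sw s x) = x. Proof. by case: s; case: x. Qed.
Lemma swsw s t (x : W * W) : sw s (sw t x) = sw (s (+) t) x. Proof. by case: s; case: t; case: x. Qed.
Lemma wmulA : associative wmul.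
Proof.
case=> a s [b t] [c u]; rewrite /wmul /= swD swsw addrA; congr (_, _).
by rewrite addbA.
Qed.
Lemma wmul1 : left_id wone wmul.
Proof. by case=> a s; rewrite /wmul /= add0r. Qed.
Lemma wmulV : left_inverse wone winv wmul.
Proof. by case=> a s; rewrite /wmul /winv /= addNr addbb. Qed.
HB.instance Definition _ := Finite_isGroup.Build wr wmulA wmul1 wmulV.
End Wr.

HB.instance Definition _ (V W : finZmodType) := GRing.Zmodule.on (V * W)%type.

Definition K := wr 'Z_10.
Definition Kc := (nat * nat * bool)%type.
Definition code (k : K) : Kc := ((val k.1.1, val k.1.2), k.2).
Definition dec (c : Kc) : K := ((inZp c.1.1, inZp c.1.2), c.2).
Definition kmulc (x y : Kc) : Kc :=
  let c := sw x.2 y.1 in (((x.1.1 + c.1) %% 10, (x.1.2 + c.2) %% 10)%N, x.2 (+) y.2).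
Definition zc : Kc := (0, 0, true)%N.
Definition Yc : seq Kc :=
  [:: zc; (3, 5, true); (5, 7, true); (0, 5, true); (5, 0, true); (5, 1, true); (9, 5, true);
      (2, 1, true); (9, 8, true); (1, 8, true); (2, 9, true); (3, 2, false); (7, 8, false);
      (1, 4, false); (9, 6, false); (0, 5, false)]%N.
Definition dirc (k : Kc) : int * int :=
  match k with
  | (3, 5, true) => (Posz 3, Negz 0) | (5, 7, true) => (Posz 1, Negz 2)
  | (0, 5, true) => (Posz 3, Negz 0) | (5, 0, true) => (Posz 1, Negz 2)
  | (5, 1, true) => (Posz 1, Negz 1) | (9, 5, true) => (Posz 2, Negz 0)
  | (2, 1, true) => (Posz 2, Negz 0) | (9, 8, true) => (Posz 1, Negz 1)
  | (1, 8, true) => (Posz 1, Posz 2)  | (2, 9, true) => (Posz 2, Posz 1)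
  | (3, 2, false) => (Posz 1, Negz 0) | (7, 8, false) => (Posz 1, Negz 0)
  | (1, 4, false) => (Posz 1, Posz 3) | (9, 6, false) => (Posz 1, Posz 3)
  | _ => (Posz 3, Posz 1) end.
Local Open Scope ring_scope.
Definition dirsc (k : Kc) : seq (int * int) :=
  if k == zc then [:: (1, 1); (1, -1)] else [:: dirc k].
Definition det (b c : int * int) : int := b.1 * c.2 - b.2 * c.1.
Definition okdet (d : int) := (d != 0) && (`|d| <= 10).
Definition coversc (k : Kc) :=
  has (fun y1 => has (fun y2 => has (fun b => has (fun c =>
     (kmulc y1 y2 == k) && okdet (det b (sw y1.2 c)))
     (dirsc y2)) (dirsc y1)) Yc) Yc.
Definition allKc : seq Kc :=
  flatten [seq flatten [seq [seq ((a, b), s) | s <- [:: true; false]] | b <- iota 0 10] | a <- iota 0 10].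
Lemma table : all coversc allKc.
Proof. vm_compute. reflexivity. Qed.

Definition invc (x : Kc) : Kc :=
  let c := sw x.2 x.1 in (((10 - c.1) %% 10, (10 - c.2) %% 10)%N, x.2).
Definition negp (b : int * int) : int * int := (- b.1, - b.2).
Lemma tableY :
  all (fun c => [&& (c.1.1 < 10)%N, (c.1.2 < 10)%N, invc c \in Yc &
     all (fun b => (0 < `|b.1| <= 10)%N &&
        has (fun b' => (b' == sw c.2 b) || (b' == negp (sw c.2 b))) (dirsc (invc c)))
     (dirsc c)]) Yc.
Proof. vm_compute. reflexivity. Qed.
Lemma uniqYc : uniq Yc. Proof. vm_compute. reflexivity. Qed.
Lemma Yc1 : ((0, 0), false)%N \notin Yc. Proof. vm_compute. reflexivity. Qed.
Lemma Yc10 : ((1, 0), false)%N \notin Yc. Proof. vm_compute. reflexivity. Qed.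
Lemma sizeYc : size Yc = 16%N. Proof. by []. Qed.

Lemma code_inj : injective code.
Proof.
case=> [[a1 a2] s] [[b1 b2] t]; rewrite /code /= => -[h1 h2 ->].
by congr (_, _, _); apply/val_inj.
Qed.
Lemma codeK (c : Kc) : (c.1.1 < 10)%N -> (c.1.2 < 10)%N -> code (dec c) = c.
Proof. by case: c => [[a b] s] /= ha hb; rewrite /code /= !modn_small. Qed.
Lemma code_mul (x y : K) : code (x * y)%g = kmulc (code x) (code y).
Proof. by case: x => [[a1 a2] s]; case: y => [[b1 b2] t]; case: s. Qed.
Lemma code_inv (x : K) : code (x^-1)%g = invc (code x).
Proof.
case: x => [[a1 a2] s]; rewrite /code /invc /=.
by case: s => /=; congr (_, _, _) => //=; rewrite ?modnDml // addnC.
Qed.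

Section Gen.
Variable V : finZmodType.
Hypothesis Hinj : forall d : nat, (0 < d <= 10)%N -> injective (fun x : V => x *+ d).

Definition G := wr (V * 'Z_10)%type.
Definition mk (v : V * V) (k : K) : G := ((v.1, k.1.1), (v.2, k.1.2), k.2).
Definition pk (x : G) : K := ((x.1.1.2, x.1.2.2), x.2).
Definition fv (x : G) : V * V := (x.1.1.1, x.1.2.1).
Lemma mkK x : mk (fv x) (pk x) = x. Proof. by case: x => [[[v1 a1] [v2 a2]] s]. Qed.
Lemma pk_mk v k : pk (mk v k) = k. Proof. by case: k => [[a b] s]. Qed.
Lemma fv_mk v k : fv (mk v k) = v. Proof. by case: v. Qed.
Lemma mk_mul v k w l : (mk v k * mk w l)%g = mk (v + sw k.2 w) (k * l)%g.
Proof.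
case: v => v1 v2; case: w => w1 w2; case: k => [[a1 a2] s]; case: l => [[b1 b2] t].
by case: s.
Qed.
Lemma mk_inv v k : ((mk v k)^-1)%g = mk (- sw k.2 v) (k^-1)%g.
Proof. case: v => v1 v2; case: k => [[a1 a2] s]; by case: s. Qed.

Definition sc (t : V) (b : int * int) : V * V := (t *~ b.1, t *~ b.2).
Definition line (b : int * int) : {set V * V} := [set sc t b | t : V].
Definition onfib (k : K) (v : V * V) : bool := has (fun b => v \in line b) (dirsc (code k)).
Definition Y : {set K} := locked [set k | code k \in Yc].
Definition X : {set G} := [set x | (pk x \in Y) && onfib (pk x) (fv x)].

Lemma injz (d : int) : (0 < `|d| <= 10)%N -> injective (fun x : V => x *~ d).
Proof.
case: d => [n|n] /= h x y /=.
  by rewrite -!pmulrn; apply: Hinj.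
rewrite !NegzE !mulrNz -!pmulrn => /oppr_inj; exact: Hinj.
Qed.

Lemma solve (b c : int * int) (w : V * V) : okdet (det b c) ->
  exists t u, w = sc t b + sc u c.
Proof.
case: b => b1 b2; case: c => c1 c2; rewrite /okdet /det /= => /andP[D0 D10].
set D := b1 * c2 - b2 * c1.
have inj : injective (fun x : V => x *~ D) by apply: injz; rewrite absz_gt0 D0.
have [g gK Kg] := injF_bij inj.
have KgD : forall y, g y *~ D = y := Kg.
exists (g (w.1 *~ c2 - w.2 *~ c1)), (g (w.2 *~ b1 - w.1 *~ b2)).
case: w => w1 w2 /=; rewrite /sc /=; congr (_, _); apply: inj => /=.
  rewrite mulrzDl mulrzAC KgD mulrzAC KgD !mulrzBl -!mulrzA /D mulrzBr.
  by rewrite (mulrC c2 b1) (mulrC c1 b1) addrA (addrNK (w2 *~ (b1 * c1))).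
rewrite mulrzDl mulrzAC KgD mulrzAC KgD !mulrzBl -!mulrzA /D mulrzBr.
by rewrite (mulrC c2 b2) (mulrC c1 b2) [RHS]addrC addrA (addrNK (w1 *~ (b2 * c2))).
Qed.

Lemma memKc (k : K) : code k \in allKc.
Proof.
case: k => [[a b] s]; rewrite /code /=.
rewrite /allKc; apply/flattenP.
exists (flatten [seq [seq ((nat_of_ord a, b0), s0) | s0 <- [:: true; false]] | b0 <- iota 0 10]).
  by apply/mapP; exists (nat_of_ord a) => //; rewrite mem_iota /= ltn_ord.
apply/flattenP; exists [seq ((nat_of_ord a, nat_of_ord b), s0) | s0 <- [:: true; false]].
  by apply/mapP; exists (nat_of_ord b) => //; rewrite mem_iota /= ltn_ord.
by case: s; rewrite !inE eqxx ?orbT.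
Qed.

Lemma Ycodes c : c \in Yc -> code (dec c) = c.
Proof. by move=> hc; have /and4P[h1 h2 _ _] := allP tableY c hc; rewrite codeK. Qed.

Lemma memY k : (k \in Y) = (code k \in Yc). Proof. by rewrite /Y -lock inE. Qed.
Lemma mem_line t b : sc t b \in line b. Proof. exact: imset_f. Qed.

Lemma fact2 (x : G) : exists x1 x2, [/\ x1 \in X, x2 \in X & (x1 * x2)%g = x].
Proof.
have := allP table _ (memKc (pk x)).
case/hasP => y1c hy1 /hasP [y2c hy2 /hasP [b hb /hasP [c hc /andP [/eqP hk hdet]]]].
have [t [u htu]] := solve (fv x) hdet.
have cy1 : code (dec y1c) = y1c := Ycodes hy1.
have cy2 : code (dec y2c) = y2c := Ycodes hy2.
have hy12 : (dec y1c * dec y2c)%g = pk x by apply: code_inj; rewrite code_mul cy1 cy2.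
exists (mk (sc t b) (dec y1c)), (mk (sc u c) (dec y2c)); split.
- rewrite inE pk_mk fv_mk memY cy1 hy1 /onfib cy1 /=.
  by apply/hasP; exists b => //; apply: mem_line.
- rewrite inE pk_mk fv_mk memY cy2 hy2 /onfib cy2 /=.
  by apply/hasP; exists c => //; apply: mem_line.
rewrite mk_mul hy12 -[RHS]mkK htu; congr mk; congr (_ + _).
by rewrite /dec /=; case: (y1c.2).
Qed.

Lemma within2 g h : cayley_within X 2 g h.
Proof.
have [x1 [x2 [h1 h2 e]]] := fact2 (g^-1 * h)%g.
exists [:: (g * x1)%g; (g * x1 * x2)%g].
rewrite /= /cayley_rel !mulKg h1 h2 -mulgA e mulKVg eqxx.
by [].
Qed.

Lemma notin1 : (1%g : G) \notin X.
Proof. by rewrite inE memY. Qed.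

Lemma XV : (X^-1)%g = X.
Proof.
have H : forall x, x \in X -> (x^-1)%g \in X.
  move=> x; rewrite -[x]mkK; set v := fv x; set k := pk x.
  rewrite inE pk_mk fv_mk memY => /andP [hk /hasP [b hb /imsetP [t _ ->]]].
  have /and4P [_ _ hinv hall] := allP tableY _ hk.
  have /andP [_ /hasP [b' hb' hbb]] := allP hall _ hb.
  rewrite mk_inv inE pk_mk fv_mk memY code_inv hinv /onfib code_inv.
  apply/hasP; exists b' => //.
  have -> : - sw k.2 (sc t b) = sc (- t) (sw k.2 b).
    by case: (k.2); rewrite /sc /= !mulNrz.
  case/orP: hbb => /eqP ->; first exact: mem_line.
  have -> : sc (- t) (sw k.2 b) = sc t (negp (sw k.2 b)) by rewrite /sc /= !mulNrz !mulrNz.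
  exact: mem_line.
apply/setP => x; rewrite mem_invg; apply/idP/idP; first by move/H; rewrite invgK.
exact: H.
Qed.

Lemma notwithin1 : ~ cayley_within X 1 1%g (mk 0 (dec ((1, 0), false)%N)).
Proof.
case=> p /and3P [hp hl hs].
case: p hp hl hs => [|a [|b p]] //=.
  move=> _ /eqP /(congr1 pk); rewrite pk_mk => /(congr1 code).
  by rewrite (codeK (c := ((1, 0), false)%N)).
rewrite andbT /cayley_rel invg1 mul1g => ha /eqP ea _; move: ha; rewrite ea inE pk_mk memY.
by rewrite (codeK (c := ((1, 0), false)%N)).
Qed.

Lemma genX : <<X>>%g = [set: G].
Proof.
apply/eqP; rewrite eqEsubset subsetT /=; apply/subsetP => x _.
have [x1 [x2 [h1 h2 <-]]] := fact2 x.
by rewrite groupM // mem_gen.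
Qed.

Lemma line_card b : (0 < `|b.1| <= 10)%N -> #|line b| = #|V|.
Proof.
move=> hb; rewrite card_imset // => t t' [] /(injz hb).
by [].
Qed.

Lemma decK k : dec (code k) = k.
Proof. by case: k => [[a b] s]; congr (_, _, _); apply/val_inj; rewrite /= modn_small. Qed.

Definition Yl : seq K := locked (map dec Yc).
Lemma cardY : #|Y| = 16%N.
Proof.
have U : uniq Yl.
  rewrite /Yl -lock map_inj_in_uniq ?uniqYc //.
  by move=> c1 c2 h1 h2 /(congr1 code); rewrite !Ycodes.
have E : Y =i Yl.
  move=> k; rewrite memY /Yl -lock; apply/idP/mapP.
    by move=> hk; exists (code k) => //; rewrite decK.
  by case=> c hc ->; rewrite Ycodes.
rewrite (eq_card E); move/card_uniqP: U => ->.
by rewrite /Yl -lock size_map.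
Qed.

Lemma fib_card k : k \in Y -> code k != zc -> #|[set v | onfib k v]| = #|V|.
Proof.
rewrite memY => hk hz.
have /and4P [_ _ _ hall] := allP tableY _ hk.
have hd : dirsc (code k) = [:: dirc (code k)] by rewrite /dirsc (negbTE hz).
rewrite hd in hall; have /andP [hb _] := allP hall _ (mem_head _ _).
rewrite -(line_card hb); apply: eq_card => v; rewrite !inE /onfib hd /=.
by rewrite orbF.
Qed.

Lemma fibz_card : #|[set v | onfib (dec zc) v]| = (#|V| + #|V| - 1)%N.
Proof.
have -> : [set v | onfib (dec zc) v] = line (1, 1) :|: line (1, -1).
  by apply/setP => v; rewrite !inE /onfib /= orbF.
rewrite cardsU !line_card //.
have -> : line (1, 1) :&: line (1, -1) = [set 0].
  apply/setP => v; rewrite !inE; apply/andP/eqP.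
    case=> /imsetP [t _ ->] /imsetP [u _ /eqP]; rewrite /sc /= xpair_eqE.
    rewrite !mulr1z mulrN1z => /andP [/eqP tu /eqP tu'].
    have t0 : t = 0.
      have h2 : t *+ 2 = 0 *+ 2 by rewrite mul0rn mulr2n {1}tu' tu addNr.
      exact: (@Hinj 2%N) h2.
    by rewrite /sc t0.
  move=> ->; split; apply/imsetP; exists 0 => //; by rewrite /sc !mul0rz.
by rewrite cards1.
Qed.

Lemma cardX : #|X| = (17 * #|V| - 1)%N.
Proof.
pose S : {set K * (V * V)} := [set p | (p.1 \in Y) && onfib p.1 p.2].
have XS : X = (fun p => mk p.2 p.1) @: S.
  apply/setP => x; apply/idP/imsetP.
    by move=> hx; exists (pk x, fv x); [rewrite inE; rewrite inE in hx | rewrite /= mkK].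
  by case=> -[k v] hp ->; rewrite inE pk_mk fv_mk; rewrite inE in hp.
rewrite XS card_imset; last first.
  move=> [k v] [k' v'] /= h.
  by have := congr1 fv h; have := congr1 pk h; rewrite !pk_mk !fv_mk => -> ->.
rewrite -sum1dep_card.
rewrite -(pair_big_dep (fun k => k \in Y) (fun k v => onfib k v) (fun _ _ => 1%N)) /=.
have zY : dec zc \in Y by rewrite memY Ycodes.
rewrite (bigD1 (dec zc)) //= sum1dep_card fibz_card.
rewrite (eq_bigr (fun _ => #|V|)); last first.
  move=> k /andP [hk hkz]; rewrite sum1dep_card (fib_card hk) //.
rewrite sum_nat_cond_const.
have -> : #|[set k | (k \in Y) && (k != dec zc)]| = 15%N.
  have := cardsD1 (dec zc) Y; rewrite zY cardY => /eqP.
  rewrite eqSS => /eqP ->; apply: eq_card => k; rewrite !inE andbC.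
  by [].
have : (0 < #|V|)%N by apply/card_gt0P; exists 0.
move: #|V| => m hm; lia.
Qed.

Lemma cardG : #|[set: G]| = (200 * #|V| ^ 2)%N.
Proof.
rewrite cardsT /G /wr !card_prod card_bool card_ord.
move: #|V| => m; rewrite -[(Zp_trunc 10).+2]/10%N; nia.
Qed.

Theorem gen_thm : exists (gT : finGroupType) (X : {set gT}),
    [/\ cayley_conn_set X, cayley_diameter X 2,
        #|X| = (17 * #|V| - 1)%N & #|[set: gT]| = (200 * #|V| ^ 2)%N].
Proof.
exists G, X; split.
- by split; [apply: notin1 | apply: XV | apply: genX].
- split; first exact: within2.
  by split => //; exists 1%g, (mk 0 (dec ((1, 0), false)%N)); apply: notwithin1.
- exact: cardX.
- exact: cardG.
Qed.
End Gen.

Local Close Scope ring_scope.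
Lemma hI1 : forall d, (0 < d <= 10)%N -> injective (fun x : 'I_1 => (x *+ d)%R).
Proof. by move=> d _ x y _; rewrite (ord1 x) (ord1 y). Qed.
Lemma hFp n : prime n -> n %% 10 = 1 -> forall d, (0 < d <= 10)%N -> injective (fun x : 'F_n => (x *+ d)%R).
Proof.
move=> pn hn d /andP [d0 d10] x y /= h.
have nz : (d%:R : 'F_n)%R != 0%R.
  rewrite -(dvdn_pcharf (pchar_Fp pn)).
  apply/negP => /dvdn_leq => /(_ d0) hle.
  have := prime_gt1 pn; lia.
by apply: (mulIf nz); rewrite !mulr_natr.
Qed.
Theorem theorem1 (n : nat) (hn : n = 1 \/ (prime n /\ n %% 10 = 1)) :
  exists (gT : finGroupType) (X : {set gT}),
    [/\ cayley_conn_set X,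
        cayley_diameter X 2,
        #|X| = 17 * n - 1 &
        #|[set: gT]| = 200 * n ^ 2].
Proof.
case: hn => [-> | [pn hn]].
  by have := gen_thm hI1; rewrite card_ord.
by have := gen_thm (hFp pn hn); rewrite card_Fp.
Qed.
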